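(* Let $n\ge1$, and let $\epsilon=1$ if $n$ is odd and $\epsilon=0$ if $n$ is even. The Pontrjagin classes $p_i(V_1\oplus V_2)$ for $1\le i\le n-\epsilon$ are algebraically independent in $H^*(BSO(n)\times BSO(n);\mathbb{Q})$.
   Context: $V_1\oplus V_2$ denotes the rank $2n$ vector bundle over $BSO(n)\times BSO(n)$ which is the external direct sum of the tautological bundles of the two factors (equivalently, associated to the representation $V_1\oplus V_2$ of $SO(n)\times SO(n)$, where $V_i$ is the standard representation of the $i$-th factor with the other factor acting trivially). *)

(* Defs.v *)
From mathcomp Require Import all_boot all_algebra.
From mathcomp Require Import mpoly.
Set Implicit Arguments. Unset Strict Implicit. Unset Printing Implicit Defensive.
Import GRing.Theory.
Local Open Scope ring_scope.

(* Algebraic model of H^*(BSO(n) x BSO(n); Q), k := n./2 :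
   - n = 2k+1 : H^*(BSO(n);Q) = Q[p_1,...,p_k]
   - n = 2k   : H^*(BSO(n);Q) = Q[p_1,...,p_{k-1}, e], with p_k = e^2.
   In both cases it is a polynomial ring in k generators; the product
   BSO(n) x BSO(n) has (Kunneth) the polynomial ring in k + k generators,
   the first k coming from the first factor (lshift) and the last k from the
   second factor (rshift).  Generator j : 'I_k of a factor is p_(j+1), except
   for n even and j+1 = k where it is the Euler class e. *)
Definition Hring (n : nat) := {mpoly rat[n./2 + n./2]}.

Definition pont (n : nat) (side : 'I_(n./2) -> 'I_(n./2 + n./2)) (i : nat)
  : Hring n :=
  if i == 0%N then 1 else
  \sum_(j < n./2 | j.+1 == i)
     (if ~~ odd n && (j.+1 == n./2) then 'X_(side j) ^+ 2 else 'X_(side j)).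

Definition pont1 (n : nat) (i : nat) : Hring n := @pont n (fun j => lshift n./2 j) i.
Definition pont2 (n : nat) (i : nat) : Hring n := @pont n (fun j => rshift n./2 j) i.

(* Whitney sum formula (valid rationally):  p(V1 (+) V2) = p(V1) p(V2). *)
Definition pont_sum (n : nat) (i : nat) : Hring n :=
  \sum_(a < i.+1) pont1 n a * pont2 n (i - a).

Definition alg_indep (m k : nat) (t : m.-tuple {mpoly rat[k]}) : Prop :=
  forall P : {mpoly rat[m]}, P \mPo t = 0 -> P = 0.

(* Main.v *)
Require Import Defs.
From mathcomp Require Import all_boot all_algebra.
From mathcomp Require Import mpoly.
From mathcomp Require Import zify.
Set Implicit Arguments. Unset Strict Implicit. Unset Printing Implicit Defensive.
Import GRing.Theory.
Local Open Scope ring_scope.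
Lemma compA (m k l : nat) (P : {mpoly rat[m]}) (t : m.-tuple {mpoly rat[k]})
  (u : k.-tuple {mpoly rat[l]}) :
  (P \mPo t) \mPo u = P \mPo [tuple (tnth t i \mPo u) | i < m].
Proof.
rewrite [P \mPo t]comp_mpolyE [RHS]comp_mpolyE raddf_sum /=; apply: eq_bigr => mm _.
rewrite linearZ /= rmorph_prod /=; congr (_ *: _); apply: eq_bigr => i _.
by rewrite rmorphXn /= tnth_mktuple.
Qed.

Lemma sq_inj (K : nat) (d : 'I_K -> nat) (hd : forall j, (0 < d j)%N)
  (f : {mpoly rat[K]}) :
  f \mPo [tuple 'X_j ^+ d j | j < K] = 0 -> f = 0.
Proof.
pose D (m : 'X_{1..K}) := [multinom (d j * m j)%N | j < K].
have Dinj : injective D.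
  move=> m1 m2 e; apply/mnmP => j.
  have := congr1 (fun m : 'X_{1..K} => m j) e; rewrite /D !mnmE => /eqP.
  by rewrite eqn_mul2l eqn0Ngt hd /= => /eqP.
have XD m : 'X_[m] \mPo [tuple 'X_j ^+ d j | j < K] = 'X_[D m].
  rewrite comp_mpolyX.
  under eq_bigr => i _ do rewrite tnth_mktuple -exprM.
  rewrite mprodXnE; congr 'X_[_]; apply/mnmP=> j.
  rewrite mnm_sumE mnmE (bigD1 j) //= big1 => [|i /negbTE ne].
    by rewrite mulmnE mnm1E eqxx mul1n addn0.
  by rewrite mulmnE mnm1E ne mul0n.
move=> h; apply/eqP; apply/contraT => nz.
have := mlead_supp nz; set m0 := mlead f => m0in.
have := congr1 (fun p => p@_(D m0)) h.
rewrite comp_mpolyEX /= mcoeff0 raddf_sum /=.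
rewrite (bigD1_seq m0) //= ?msupp_uniq //.
rewrite mcoeffZ XD mcoeffX eqxx mulr1 big1_seq ?addr0.
  by move=> /eqP; rewrite mcoeff_eq0 m0in.
move=> m /andP[ne _]; rewrite mcoeffZ XD mcoeffX.
by rewrite (inj_eq Dinj) (negbTE ne) mulr0.
Qed.
Definition gp (k : nat) (sq : bool) (side : 'I_k -> 'I_(k+k)) (i : nat)
  : {mpoly rat[k+k]} :=
  if i == 0%N then 1 else
  \sum_(j < k | j.+1 == i)
     (if sq && (j.+1 == k) then 'X_(side j) ^+ 2 else 'X_(side j)).

Definition gs k sq i := \sum_(a < i.+1)
  gp sq (fun j => lshift k j) a * gp sq (fun j => rshift k j) (i - a).

Definition Fsum k (f : 'I_k -> 'I_(k+k)) (a : nat) : {mpoly rat[k+k]} :=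
  \sum_(h : {set 'I_k} | #|h| == a) \prod_(i in h) 'X_(f i).

Lemma split_l k (j : 'I_k) : split (lshift k j) = inl j.
Proof. exact: (unsplitK (inl _ j)). Qed.
Lemma split_r k (j : 'I_k) : split (rshift k j) = inr j.
Proof. exact: (unsplitK (inr _ j)). Qed.

Definition phi k (p : {set 'I_k} * {set 'I_k}) : {set 'I_(k+k)} :=
  [set j | match split j with inl a => a \in p.1 | inr b => b \in p.2 end].

Lemma split_mesym k i :
  \sum_(a < i.+1) Fsum (fun j => lshift k j) a * Fsum (fun j => rshift k j) (i - a)
  = mesym (k+k) rat i.
Proof.
have phib : bijective (@phi k).
  apply: (@Bijective _ _ _ (fun h : {set 'I_(k+k)} => ([set a | lshift k a \in h], [set b | rshift k b \in h]))).
    by case=> h1 h2; congr pair; apply/setP=> j; rewrite !inE ?split_l ?split_r.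
  by move=> h; apply/setP=> j; rewrite !inE; case: split_ordP => a ->; rewrite inE.
have card_phi p : #|phi p| = (#|p.1| + #|p.2|)%N.
  rewrite -!sum1_card big_mkcond big_split_ord /=.
  rewrite [in RHS](big_mkcond (mem p.1)) [in RHS](big_mkcond (mem p.2)).
  by congr addn; apply: eq_bigr => j _; rewrite !inE ?split_l ?split_r.
have prod_phi p : \prod_(j in phi p) 'X_j =
    (\prod_(j in p.1) 'X_(lshift k j)) * \prod_(j in p.2) 'X_(rshift k j)
    :> {mpoly rat[k+k]}.
  rewrite big_mkcond big_split_ord /=.
  rewrite [in RHS](big_mkcond (mem p.1)) [in RHS](big_mkcond (mem p.2)).
  by congr (_ * _); apply: eq_bigr => j _; rewrite !inE ?split_l ?split_r.
have -> : mesym (k+k) rat i =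
  \sum_(h : {set 'I_(k+k)} | #|h| == i) \prod_(j in h) 'X_j by [].
rewrite (reindex (@phi k)); last by apply: onW_bij.
under [RHS]eq_bigr => p _ do rewrite prod_phi.
under [RHS]eq_bigl => p do rewrite card_phi.
rewrite [RHS]big_mkcond /=.
rewrite -(pair_bigA _ (fun h1 h2 : {set 'I_k} => if (#|h1| + #|h2| == i)%N then
   (\prod_(j in h1) 'X_(lshift k j)) * \prod_(j in h2) 'X_(rshift k j) else 0)).
under eq_bigr => a _ do rewrite /Fsum mulr_suml big_mkcond /=.
rewrite [LHS]exchange_big /=; apply: eq_bigr => h1 _.
have aux (c : bool) (x : {mpoly rat[k+k]}) (P : pred {set 'I_k}) y :
  (if c then x * \sum_(h | P h) y h else 0) = \sum_h (if c && P h then x * y h else 0).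
  case: c => /=; first by rewrite mulr_sumr big_mkcond.
  by rewrite big1.
under eq_bigr => a _ do rewrite aux.
rewrite [LHS]exchange_big /=; apply: eq_bigr => h2 _.
case: ifP => hs.
  have lt : (#|h1| < i.+1)%N by rewrite ltnS -(eqP hs) leq_addr.
  have e2 : #|h2| == (i - #|h1|)%N by rewrite -(eqP hs) addKn.
  rewrite (bigD1 (Ordinal lt)) //= (eqxx #|h1|) e2 /= [X in _ + X]big1 ?addr0 //.
  move=> a ne; case: ifP => // /andP[/eqP e _]; case/eqP: ne; exact: val_inj.
rewrite big1 // => a _; case: ifP => // /andP[/eqP e /eqP e2].
move: hs; rewrite e e2 subnKC ?eqxx //.
by rewrite -ltnS ltn_ord.
Qed.

Definition u k : (k+k).-tuple {mpoly rat[k+k]} :=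
  [tuple (match split j with inl a => Fsum (fun j => lshift k j) a.+1
                           | inr b => Fsum (fun j => rshift k j) b.+1 end) | j < k+k].

Lemma Fsum0 k f : Fsum f 0 = 1 :> {mpoly rat[k+k]}.
Proof.
rewrite /Fsum (eq_bigl (pred1 set0)) ?big_pred1_eq ?big_set0 // => h.
by rewrite /= cards_eq0.
Qed.

Lemma Fsum_big k f a : (k < a)%N -> Fsum f a = 0 :> {mpoly rat[k+k]}.
Proof.
move=> lt; rewrite /Fsum big_pred0 // => h.
apply/negbTE; rewrite neq_ltn; apply/orP; left.
by apply: leq_ltn_trans lt; rewrite -[X in (_ <= X)%N](card_ord k) max_card.
Qed.

Lemma gp_u k (side : 'I_k -> 'I_(k+k)) a
  (hs : forall j, tnth (u k) (side j) = Fsum side j.+1) :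
  gp false side a \mPo u k = Fsum side a.
Proof.
rewrite /gp; case: eqP => [->|ne]; first by rewrite comp_mpoly1 Fsum0.
rewrite raddf_sum /=.
under eq_bigr => j _ do rewrite comp_mpolyXU -tnth_nth hs.
case: (ltnP k a) => ha.
  rewrite big_pred0 ?Fsum_big // => j; rewrite ltn_eqF //.
  exact: leq_ltn_trans (ltn_ord j) ha.
case: a ne ha => [//|a] _ ha.
by rewrite (big_pred1 (Ordinal ha)) // => j; rewrite eqSS.
Qed.

Lemma u_l k j : tnth (u k) (lshift k j) = Fsum (fun j => lshift k j) j.+1.
Proof. by rewrite tnth_mktuple split_l. Qed.
Lemma u_r k j : tnth (u k) (rshift k j) = Fsum (fun j => rshift k j) j.+1.
Proof. by rewrite tnth_mktuple split_r. Qed.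

Lemma gs_u k i : gs k false i \mPo u k = mesym (k+k) rat i.
Proof.
rewrite -split_mesym /gs raddf_sum /=; apply: eq_bigr => a _.
by rewrite rmorphM /= !gp_u //; [exact: u_r | exact: u_l].
Qed.

Definition sqd k sq (j : 'I_(k+k)) : nat :=
  if sq && ((j == k.-1 :> nat) || (j == (k+k).-1 :> nat)) then 2 else 1.

Definition sqt k sq : (k+k).-tuple {mpoly rat[k+k]} :=
  [tuple 'X_j ^+ sqd sq j | j < k+k].

Lemma gp_sq k sq (side : 'I_k -> 'I_(k+k))
  (hs : forall j, sqd sq (side j) = if sq && (j.+1 == k) then 2 else 1) a :
  gp sq side a = gp false side a \mPo sqt k sq.
Proof.
rewrite /gp; case: eqP => _; first by rewrite comp_mpoly1.
rewrite raddf_sum /=; apply: eq_bigr => j _.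
rewrite comp_mpolyXU -tnth_nth tnth_mktuple hs.
by case: ifP.
Qed.

Lemma sqd_l k sq (j : 'I_k) : sqd sq (lshift k j) = if sq && (j.+1 == k) then 2 else 1.
Proof.
rewrite /sqd /=; congr (if sq && _ then _ else _).
have := ltn_ord j => hj.
apply/idP/idP => [/orP[/eqP|/eqP] | /eqP] => h;
  [apply/eqP; lia | apply/eqP; lia | apply/orP; left; apply/eqP; lia].
Qed.

Lemma sqd_r k sq (j : 'I_k) : sqd sq (rshift k j) = if sq && (j.+1 == k) then 2 else 1.
Proof.
rewrite /sqd /=; congr (if sq && _ then _ else _).
have := ltn_ord j => hj.
apply/idP/idP => [/orP[/eqP|/eqP] | /eqP] => h;
  [apply/eqP; lia | apply/eqP; lia | apply/orP; right; apply/eqP; lia].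
Qed.

Lemma gs_sq k sq i : gs k sq i = gs k false i \mPo sqt k sq.
Proof.
rewrite /gs raddf_sum /=; apply: eq_bigr => a _.
by rewrite rmorphM /= -!gp_sq //; [exact: sqd_r | exact: sqd_l].
Qed.

Lemma gen k sq : alg_indep [tuple gs k sq i.+1 | i < k + k].
Proof.
move=> P hP.
have h1 : [tuple gs k sq i.+1 | i < k+k] =
   [tuple tnth [tuple gs k false i.+1 | i < k+k] i \mPo sqt k sq | i < k+k].
  by apply: eq_mktuple => i; rewrite tnth_mktuple gs_sq.
rewrite h1 -compA in hP.
have h2 : P \mPo [tuple gs k false i.+1 | i < k+k] = 0.
  apply: (@sq_inj (k+k) (sqd sq)) => //.
  by move=> j; rewrite /sqd; case: ifP.
have := congr1 (comp_mpoly (u k)) h2; rewrite compA comp_mpoly0.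
have -> : [tuple tnth [tuple gs k false i.+1 | i < k+k] i \mPo u k | i < k+k]
   = [tuple mesym (k+k) rat i.+1 | i < k+k].
  by apply: eq_mktuple => i; rewrite tnth_mktuple gs_u.
exact: msym_fundamental_un0.
Qed.
Theorem lemma4p3 (n : nat) (hn : (1 <= n)%N) :
  alg_indep [tuple pont_sum n i.+1 | i < n - odd n].
Proof.
have e : (n - odd n = n./2 + n./2)%N.
  by rewrite addnn -[n in (n - _)%N]odd_double_half addKn.
rewrite e; exact (@gen (n./2) (~~ odd n)).
Qed.
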